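(* Let $A=A_{i,r}$ be an object of a double complex in an abelian category. (1) If $(A_{i-1,r})_\square=0$ and ${}^\square A_{i,r+1}=0$, then the intramural maps ${}^\square A\to H^{\mathrm v}(A)$ and $H^{\mathrm h}(A)\to A_\square$ are isomorphisms. (2) If $(A_{i,r-1})_\square=0$ and ${}^\square A_{i+1,r}=0$, then the intramural maps ${}^\square A\to H^{\mathrm h}(A)$ and $H^{\mathrm v}(A)\to A_\square$ are isomorphisms.
   Context: Work in an abelian category $\mathcal{A}$. A double complex is a family of objects $A_{i,r}$ $(i,r\in\mathbb{Z})$ of $\mathcal{A}$, drawn in a grid with $i$ indexing rows (increasing downward) and $r$ indexing columns (increasing to the right), with horizontal maps $\delta_2:A_{i,r}\to A_{i,r+1}$ and vertical maps $\delta_1:A_{i,r}\to A_{i+1,r}$ satisfying $\delta_2\delta_2=0$, $\delta_1\delta_1=0$, $\delta_1\delta_2=\delta_2\delta_1$. A finite commutative diagram of this shape whose rows and columns are complexes is regarded as a double complex by completing it with zero objects. For an object $A=A_{i,r}$ write $d:A_{i,r-1}\to A$ and $e:A\to A_{i,r+1}$ for the horizontal maps into and out of $A$, $c:A_{i-1,r}\to A$ and $f:A\to A_{i+1,r}$ for the vertical maps into and out of $A$, $p:A_{i-1,r-1}\to A$ for the (common) composite of two arrows ending at $A$, and $q:A\to A_{i+1,r+1}$ for the composite of two arrows starting at $A$. Define: horizontal homology $H^{\mathrm h}(A)=\ker e/\operatorname{im} d$; vertical homology $H^{\mathrm v}(A)=\ker f/\operatorname{im} c$; the receptor ${}^\square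 A=(\ker e\cap\ker f)/\operatorname{im} p$; the donor $A_\square=\ker q/(\operatorname{im} c+\operatorname{im} d)$. The identity of $A$ induces the ''intramural'' maps ${}^\square A\to H^{\mathrm h}(A)\to A_\square$ and ${}^\square A\to H^{\mathrm v}(A)\to A_\square$. Each arrow $g:A\to B$ of the double complex (horizontal or vertical) induces the ''extramural'' map $A_\square\to{}^\square B$. *)

(* Defs.v *)
From Stdlib Require Import ZArith ClassicalEpsilon.
Set Implicit Arguments.
Unset Strict Implicit.

Record Category := Category_ {
  Ob :> Type;
  Hom : Ob -> Ob -> Type;
  idm : forall A, Hom A A;
  comp : forall A B C, Hom B C -> Hom A B -> Hom A C;
  comp_idl : forall A B (f : Hom A B), comp (idm B) f = f;
  comp_idr : forall A B (f : Hom A B), comp f (idm A) = f;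
  comp_assoc : forall A B C D (f : Hom C D) (g : Hom B C) (h : Hom A B),
      comp f (comp g h) = comp (comp f g) h }.
Arguments Hom {c} _ _.
Arguments idm {c} A.
Arguments comp {c A B C} _ _.
Notation "g ∘ f" := (comp g f) (at level 40, left associativity).

Section CatDefs.
Context {C : Category}.

Definition is_zero_obj (Z : C) : Prop :=
  (forall X : C, exists f : Hom Z X, forall g, g = f) /\
  (forall X : C, exists f : Hom X Z, forall g, g = f).

Definition zero_mor {X Y : C} (f : Hom X Y) : Prop :=
  exists (Z : C) (u : Hom X Z) (v : Hom Z Y), is_zero_obj Z /\ f = v ∘ u.

Definition is_product {P A B : C} (p1 : Hom P A) (p2 : Hom P B) : Prop :=
  forall (X : C) (f : Hom X A) (g : Hom X B),
    exists! u : Hom X P, p1 ∘ u = f /\ p2 ∘ u = g.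

Definition is_coproduct {S A B : C} (i1 : Hom A S) (i2 : Hom B S) : Prop :=
  forall (X : C) (f : Hom A X) (g : Hom B X),
    exists! u : Hom S X, u ∘ i1 = f /\ u ∘ i2 = g.

Definition is_kernel {A B K : C} (f : Hom A B) (k : Hom K A) : Prop :=
  zero_mor (f ∘ k) /\
  forall (X : C) (g : Hom X A), zero_mor (f ∘ g) -> exists! u : Hom X K, k ∘ u = g.

Definition is_cokernel {A B Q : C} (f : Hom A B) (c : Hom B Q) : Prop :=
  zero_mor (c ∘ f) /\
  forall (X : C) (g : Hom B X), zero_mor (g ∘ f) -> exists! u : Hom Q X, u ∘ c = g.

Definition mono {A B : C} (m : Hom A B) : Prop :=
  forall (X : C) (g h : Hom X A), m ∘ g = m ∘ h -> g = h.

Definition epi {A B : C} (m : Hom A B) : Prop :=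
  forall (X : C) (g h : Hom B X), g ∘ m = h ∘ m -> g = h.

Definition is_iso {A B : C} (f : Hom A B) : Prop :=
  exists g : Hom B A, g ∘ f = idm A /\ f ∘ g = idm B.

Record is_abelian : Prop := {
  ab_zero : exists Z : C, is_zero_obj Z;
  ab_prod : forall A B : C, exists (P : C) (p1 : Hom P A) (p2 : Hom P B), is_product p1 p2;
  ab_coprod : forall A B : C, exists (S : C) (i1 : Hom A S) (i2 : Hom B S), is_coproduct i1 i2;
  ab_ker : forall (A B : C) (f : Hom A B), exists (K : C) (k : Hom K A), is_kernel f k;
  ab_coker : forall (A B : C) (f : Hom A B), exists (Q : C) (c : Hom B Q), is_cokernel f c;
  ab_mono_normal : forall (A B : C) (m : Hom A B), mono m ->
      exists (X : C) (g : Hom B X), is_kernel g m;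
  ab_epi_normal : forall (A B : C) (m : Hom A B), epi m ->
      exists (X : C) (g : Hom X A), is_cokernel g m }.
End CatDefs.
Arguments is_abelian : clear implicits.

Record AbelianCategory := AbelianCategory_ {
  acat :> Category;
  acat_ax : is_abelian acat }.

Section Choices.
Context {C : AbelianCategory}.

Lemma hom_inh (X Y : C) : inhabited (Hom X Y).
Proof.
  destruct (ab_zero (acat_ax C)) as [Z [HZ1 HZ2]].
  destruct (HZ1 Y) as [v _]. destruct (HZ2 X) as [u _].
  exact (inhabits (v ∘ u)).
Qed.

Definition ker_pack {A B : C} (f : Hom A B) :=
  constructive_indefinite_description _ (ab_ker (acat_ax C) f).
Definition kerO {A B : C} (f : Hom A B) : C := proj1_sig (ker_pack f).
Definition kerM {A B : C} (f : Hom A B) : Hom (kerO f) A :=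
  proj1_sig (constructive_indefinite_description _ (proj2_sig (ker_pack f))).

Definition coker_pack {A B : C} (f : Hom A B) :=
  constructive_indefinite_description _ (ab_coker (acat_ax C) f).
Definition cokerO {A B : C} (f : Hom A B) : C := proj1_sig (coker_pack f).
Definition cokerM {A B : C} (f : Hom A B) : Hom B (cokerO f) :=
  proj1_sig (constructive_indefinite_description _ (proj2_sig (coker_pack f))).

Definition prod_pack (A B : C) :=
  constructive_indefinite_description _ (ab_prod (acat_ax C) A B).
Definition prodO (A B : C) : C := proj1_sig (prod_pack A B).
Definition prod_pack2 (A B : C) :=
  constructive_indefinite_description _ (proj2_sig (prod_pack A B)).
Definition pr1 (A B : C) : Hom (prodO A B) A := proj1_sig (prod_pack2 A B).
Definition pr2 (A B : C) : Hom (prodO A B) B :=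
  proj1_sig (constructive_indefinite_description _ (proj2_sig (prod_pack2 A B))).

Definition coprod_pack (A B : C) :=
  constructive_indefinite_description _ (ab_coprod (acat_ax C) A B).
Definition coprodO (A B : C) : C := proj1_sig (coprod_pack A B).
Definition coprod_pack2 (A B : C) :=
  constructive_indefinite_description _ (proj2_sig (coprod_pack A B)).
Definition in1 (A B : C) : Hom A (coprodO A B) := proj1_sig (coprod_pack2 A B).
Definition in2 (A B : C) : Hom B (coprodO A B) :=
  proj1_sig (constructive_indefinite_description _ (proj2_sig (coprod_pack2 A B))).

(* induced maps (determined uniquely whenever they exist) *)
Definition lift {K X W : C} (k : Hom K X) (g : Hom W X) : Hom W K :=
  epsilon (hom_inh W K) (fun u => k ∘ u = g).
Definition colift {X Q W : C} (c : Hom X Q) (g : Hom X W) : Hom Q W :=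
  epsilon (hom_inh Q W) (fun u => u ∘ c = g).
Definition pairing {X A B : C} (f : Hom X A) (g : Hom X B) : Hom X (prodO A B) :=
  epsilon (hom_inh _ _) (fun u => pr1 A B ∘ u = f /\ pr2 A B ∘ u = g).
Definition copairing {A B X : C} (f : Hom A X) (g : Hom B X) : Hom (coprodO A B) X :=
  epsilon (hom_inh _ _) (fun u => u ∘ in1 A B = f /\ u ∘ in2 A B = g).

(* Local data around an object X:
     d : L -> X (horizontal in), c : U -> X (vertical in),
     e : X -> R (horizontal out), f : X -> D (vertical out),
     p : UL -> X (composite in), q : X -> DR (composite out). *)
Section Local.
Variables (X L U R D UL DR : C).

(* receptor  (ker e ∩ ker f) / im p *)
Definition rec_K (e : Hom X R) (f : Hom X D) := kerM (pairing e f).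
Definition rec_p (e : Hom X R) (f : Hom X D) (p : Hom UL X) := lift (rec_K e f) p.
Definition receptor (e : Hom X R) (f : Hom X D) (p : Hom UL X) : C :=
  cokerO (rec_p e f p).
Definition rec_pi (e : Hom X R) (f : Hom X D) (p : Hom UL X) :
  Hom (kerO (pairing e f)) (receptor e f p) := cokerM (rec_p e f p).

Definition hom_in (d : Hom L X) (e : Hom X R) := lift (kerM e) d.
Definition homology (d : Hom L X) (e : Hom X R) : C := cokerO (hom_in d e).
Definition hom_pi (d : Hom L X) (e : Hom X R) : Hom (kerO e) (homology d e) :=
  cokerM (hom_in d e).

(* donor  ker q / (im c + im d) = ker (coker [c,d] -> DR) *)
Definition don_Qpi (c : Hom U X) (d : Hom L X) := cokerM (copairing c d).
Definition don_qbar (c : Hom U X) (d : Hom L X) (q : Hom X DR) :=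
  colift (don_Qpi c d) q.
Definition donor (c : Hom U X) (d : Hom L X) (q : Hom X DR) : C :=
  kerO (don_qbar c d q).
Definition don_k (c : Hom U X) (d : Hom L X) (q : Hom X DR) :
  Hom (donor c d q) (cokerO (copairing c d)) := kerM (don_qbar c d q).

End Local.
End Choices.

(* Intramural maps, specialized (to avoid type clashes between R and D we
   define them directly). *)
Section Intramural.
Context {C : AbelianCategory}.
Variables (X L U R D UL DR : C)
  (d : Hom L X) (c : Hom U X) (e : Hom X R) (f : Hom X D)
  (p : Hom UL X) (q : Hom X DR).

Definition rec_to_Hh : Hom (receptor e f p) (homology d e) :=
  colift (rec_pi e f p) (hom_pi d e ∘ lift (kerM e) (rec_K e f)).
Definition rec_to_Hv : Hom (receptor e f p) (homology c f) :=
  colift (rec_pi e f p) (hom_pi c f ∘ lift (kerM f) (rec_K e f)).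
Definition Hh_to_don : Hom (homology d e) (donor c d q) :=
  colift (hom_pi d e) (lift (don_k c d q) (don_Qpi c d ∘ kerM e)).
Definition Hv_to_don : Hom (homology c f) (donor c d q) :=
  colift (hom_pi c f) (lift (don_k c d q) (don_Qpi c d ∘ kerM f)).
End Intramural.

(* Double complexes indexed by Z x Z: i = row (down), r = column (right). *)
Record DoubleComplex (C : AbelianCategory) := DoubleComplex_ {
  dc :> Z -> Z -> C;
  d2 : forall i r, Hom (dc i r) (dc i (Z.succ r));
  d1 : forall i r, Hom (dc i r) (dc (Z.succ i) r);
  d2d2 : forall i r, zero_mor (d2 i (Z.succ r) ∘ d2 i r);
  d1d1 : forall i r, zero_mor (d1 (Z.succ i) r ∘ d1 i r);
  d1d2 : forall i r, d1 i (Z.succ r) ∘ d2 i r = d2 (Z.succ i) r ∘ d1 i r }.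

Section DCLocal.
Context {C : AbelianCategory} (A : DoubleComplex C).

Definition castH i {W : C} {r s : Z} (E : r = s) (g : Hom W (A i r)) : Hom W (A i s) :=
  match E in _ = s' return Hom W (A i s') with eq_refl => g end.
Definition castV r {W : C} {i j : Z} (E : i = j) (g : Hom W (A i r)) : Hom W (A j r) :=
  match E in _ = j' return Hom W (A j' r) with eq_refl => g end.

Definition din (i r : Z) : Hom (A i (Z.pred r)) (A i r) :=
  @castH i _ _ _ (Z.succ_pred r) (d2 A i (Z.pred r)).
Definition cin (i r : Z) : Hom (A (Z.pred i) r) (A i r) :=
  @castV r _ _ _ (Z.succ_pred i) (d1 A (Z.pred i) r).
Definition eout (i r : Z) : Hom (A i r) (A i (Z.succ r)) := d2 A i r.
Definition fout (i r : Z) : Hom (A i r) (A (Z.succ i) r) := d1 A i r.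
Definition pin (i r : Z) : Hom (A (Z.pred i) (Z.pred r)) (A i r) :=
  din i r ∘ cin i (Z.pred r).
Definition qout (i r : Z) : Hom (A i r) (A (Z.succ i) (Z.succ r)) :=
  d1 A i (Z.succ r) ∘ d2 A i r.

Definition receptor_at (i r : Z) : C := receptor (eout i r) (fout i r) (pin i r).
Definition donor_at (i r : Z) : C := donor (cin i r) (din i r) (qout i r).
Definition Hh_at (i r : Z) : C := homology (din i r) (eout i r).
Definition Hv_at (i r : Z) : C := homology (cin i r) (fout i r).

Definition rec_to_Hh_at (i r : Z) : Hom (receptor_at i r) (Hh_at i r) :=
  rec_to_Hh (din i r) (eout i r) (fout i r) (pin i r).
Definition rec_to_Hv_at (i r : Z) : Hom (receptor_at i r) (Hv_at i r) :=
  rec_to_Hv (cin i r) (eout i r) (fout i r) (pin i r).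
Definition Hh_to_don_at (i r : Z) : Hom (Hh_at i r) (donor_at i r) :=
  Hh_to_don (din i r) (cin i r) (eout i r) (qout i r).
Definition Hv_to_don_at (i r : Z) : Hom (Hv_at i r) (donor_at i r) :=
  Hv_to_don (din i r) (cin i r) (fout i r) (qout i r).
End DCLocal.

(* Main.v *)
Require Import Defs.
From Stdlib Require Import ZArith ClassicalEpsilon ProofIrrelevance.
Set Implicit Arguments.
Unset Strict Implicit.

Section Gen.
Context {C : AbelianCategory}.

Lemma zero_r {X Y Z : C} (f : Hom Y Z) (g : Hom X Y) : zero_mor f -> zero_mor (f ∘ g).
Proof. intros [Z0 [u [v [HZ ->]]]]. exists Z0, (u ∘ g), v. split; auto. symmetry; apply comp_assoc. Qed.

Lemma zero_l {X Y Z : C} (f : Hom Y Z) (g : Hom X Y) : zero_mor g -> zero_mor (f ∘ g).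
Proof. intros [Z0 [u [v [HZ ->]]]]. exists Z0, u, (f ∘ v). split; auto. apply comp_assoc. Qed.

Lemma zero_unique {X Y : C} (f g : Hom X Y) : zero_mor f -> zero_mor g -> f = g.
Proof.
  intros [Z1 [u [v [[H1a H1b] ->]]]] [Z2 [u' [v' [[H2a H2b] ->]]]].
  destruct (H1a Z2) as [w _].
  destruct (H1a Y) as [y0 Hy0].
  destruct (H2b X) as [x0 Hx0].
  assert (E1 : v' ∘ w = v) by (rewrite (Hy0 v), (Hy0 (v' ∘ w)); auto).
  assert (E2 : u' = w ∘ u) by (rewrite (Hx0 u'), (Hx0 (w ∘ u)); auto).
  rewrite E2, comp_assoc, E1. reflexivity.
Qed.

Lemma zero_exists (X Y : C) : exists z : Hom X Y, zero_mor z.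
Proof.
  destruct (ab_zero (acat_ax C)) as [Z0 HZ].
  destruct (proj1 HZ Y) as [v _]. destruct (proj2 HZ X) as [u _].
  exists (v ∘ u). exists Z0, u, v. auto.
Qed.

Lemma zero_from {Z0 Y : C} (f : Hom Z0 Y) : is_zero_obj Z0 -> zero_mor f.
Proof. intros HZ. exists Z0, (idm Z0), f. split; auto. symmetry; apply comp_idr. Qed.

Lemma zero_to {X Z0 : C} (f : Hom X Z0) : is_zero_obj Z0 -> zero_mor f.
Proof. intros HZ. exists Z0, f, (idm Z0). split; auto. symmetry; apply comp_idl. Qed.

Lemma mono_comp {X Y Z : C} (f : Hom Y Z) (g : Hom X Y) : mono f -> mono g -> mono (f ∘ g).
Proof. intros Hf Hg T a b H. apply Hg, Hf. rewrite !comp_assoc. exact H. Qed.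

Lemma epi_comp {X Y Z : C} (f : Hom Y Z) (g : Hom X Y) : epi f -> epi g -> epi (f ∘ g).
Proof. intros Hf Hg T a b H. apply Hf, Hg. rewrite <- !comp_assoc. exact H. Qed.

Lemma mono_of_comp {X Y Z : C} (f : Hom Y Z) (g : Hom X Y) : mono (f ∘ g) -> mono g.
Proof. intros H T a b E. apply H. rewrite <- !comp_assoc, E. reflexivity. Qed.

Lemma epi_of_comp {X Y Z : C} (f : Hom Y Z) (g : Hom X Y) : epi (f ∘ g) -> epi f.
Proof. intros H T a b E. apply H. rewrite !comp_assoc, E. reflexivity. Qed.

Lemma split_mono {X Y : C} (f : Hom X Y) (g : Hom Y X) : g ∘ f = idm X -> mono f.
Proof. intros H T a b E. rewrite <- (comp_idl a), <- (comp_idl b), <- H, <- !comp_assoc, E. reflexivity. Qed.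

Lemma split_epi {X Y : C} (f : Hom X Y) (g : Hom Y X) : g ∘ f = idm X -> epi g.
Proof. intros H T a b E. rewrite <- (comp_idr a), <- (comp_idr b), <- H, !comp_assoc, E. reflexivity. Qed.

Lemma zero_epi {X Y W : C} (f : Hom Y W) (e : Hom X Y) : epi e -> zero_mor (f ∘ e) -> zero_mor f.
Proof.
  intros He Hz. destruct (zero_exists Y W) as [z Hz0].
  assert (f = z). { apply He. apply zero_unique; auto. apply zero_r; auto. }
  subst; auto.
Qed.

Lemma zero_mono {X Y W : C} (m : Hom Y W) (f : Hom X Y) : mono m -> zero_mor (m ∘ f) -> zero_mor f.
Proof.
  intros Hm Hz. destruct (zero_exists X Y) as [z Hz0].
  assert (f = z). { apply Hm. apply zero_unique; auto. apply zero_l; auto. }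
  subst; auto.
Qed.

Lemma ker_mono {A B K : C} (f : Hom A B) (k : Hom K A) : is_kernel f k -> mono k.
Proof.
  intros [H0 H] T g h E.
  assert (Hz : zero_mor (f ∘ (k ∘ g))) by (rewrite comp_assoc; apply zero_r; auto).
  destruct (H _ _ Hz) as [u [Hu Huq]].
  rewrite <- (Huq g eq_refl), <- (Huq h (eq_sym E)). reflexivity.
Qed.

Lemma coker_epi {A B Q : C} (f : Hom A B) (c : Hom B Q) : is_cokernel f c -> epi c.
Proof.
  intros [H0 H] T g h E.
  assert (Hz : zero_mor ((g ∘ c) ∘ f)) by (rewrite <- comp_assoc; apply zero_l; auto).
  destruct (H _ _ Hz) as [u [Hu Huq]].
  rewrite <- (Huq g eq_refl), <- (Huq h (eq_sym E)). reflexivity.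
Qed.

Lemma lift_eq {A B K T : C} (f : Hom A B) (k : Hom K A) (y : Hom T A) :
  is_kernel f k -> zero_mor (f ∘ y) -> k ∘ lift k y = y.
Proof.
  intros Hk Hz. unfold lift. apply epsilon_spec.
  destruct (proj2 Hk _ _ Hz) as [u [Hu _]]. eauto.
Qed.

Lemma colift_eq {A B Q T : C} (f : Hom A B) (c : Hom B Q) (y : Hom B T) :
  is_cokernel f c -> zero_mor (y ∘ f) -> colift c y ∘ c = y.
Proof.
  intros Hk Hz. unfold colift. apply epsilon_spec.
  destruct (proj2 Hk _ _ Hz) as [u [Hu _]]. eauto.
Qed.

Lemma kerM_is {A B : C} (f : Hom A B) : is_kernel f (kerM f).
Proof. unfold kerM. apply (proj2_sig (constructive_indefinite_description _ _)). Qed.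

Lemma cokerM_is {A B : C} (f : Hom A B) : is_cokernel f (cokerM f).
Proof. unfold cokerM. apply (proj2_sig (constructive_indefinite_description _ _)). Qed.

Lemma prod_is (A B : C) : is_product (pr1 A B) (pr2 A B).
Proof. unfold pr2. apply (proj2_sig (constructive_indefinite_description _ _)). Qed.

Lemma coprod_is (A B : C) : is_coproduct (in1 A B) (in2 A B).
Proof. unfold in2. apply (proj2_sig (constructive_indefinite_description _ _)). Qed.


Lemma prod_uniq {P A B X : C} (p1 : Hom P A) (p2 : Hom P B) (x y : Hom X P) :
  is_product p1 p2 -> p1 ∘ x = p1 ∘ y -> p2 ∘ x = p2 ∘ y -> x = y.
Proof.
  intros H E1 E2. destruct (H _ (p1 ∘ x) (p2 ∘ x)) as [u [_ Hu]].
  rewrite <- (Hu x (conj eq_refl eq_refl)). apply Hu; auto.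
Qed.

Lemma coprod_uniq {S A B X : C} (i1 : Hom A S) (i2 : Hom B S) (x y : Hom S X) :
  is_coproduct i1 i2 -> x ∘ i1 = y ∘ i1 -> x ∘ i2 = y ∘ i2 -> x = y.
Proof.
  intros H E1 E2. destruct (H _ (x ∘ i1) (x ∘ i2)) as [u [_ Hu]].
  rewrite <- (Hu x (conj eq_refl eq_refl)). apply Hu; auto.
Qed.

Lemma prod_zero {P A B X : C} (p1 : Hom P A) (p2 : Hom P B) (x : Hom X P) :
  is_product p1 p2 -> zero_mor (p1 ∘ x) -> zero_mor (p2 ∘ x) -> zero_mor x.
Proof.
  intros H Z1 Z2. destruct (zero_exists X P) as [z Hz].
  assert (x = z) as ->; auto. apply (prod_uniq H); apply zero_unique; auto; apply zero_l; auto.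
Qed.

Lemma coprod_zero {S A B X : C} (i1 : Hom A S) (i2 : Hom B S) (x : Hom S X) :
  is_coproduct i1 i2 -> zero_mor (x ∘ i1) -> zero_mor (x ∘ i2) -> zero_mor x.
Proof.
  intros H Z1 Z2. destruct (zero_exists S X) as [z Hz].
  assert (x = z) as ->; auto. apply (coprod_uniq H); apply zero_unique; auto; apply zero_r; auto.
Qed.

Lemma pairing_eq {X A B : C} (f : Hom X A) (g : Hom X B) :
  pr1 A B ∘ pairing f g = f /\ pr2 A B ∘ pairing f g = g.
Proof.
  unfold pairing. apply epsilon_spec. destruct (@prod_is A B X f g) as [u [Hu _]]. eauto.
Qed.

Lemma copairing_eq {A B X : C} (f : Hom A X) (g : Hom B X) :
  copairing f g ∘ in1 A B = f /\ copairing f g ∘ in2 A B = g.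
Proof.
  unfold copairing. apply epsilon_spec. destruct (@coprod_is A B X f g) as [u [Hu _]]. eauto.
Qed.

Lemma iso_of {X Y : C} (m : Hom X Y) : mono m -> epi m -> is_iso m.
Proof.
  intros Hm He. destruct (ab_mono_normal (acat_ax C) Hm) as [W [g Hk]].
  assert (Zg : zero_mor g) by (apply (zero_epi He); apply (proj1 Hk)).
  assert (Z2 : zero_mor (g ∘ idm Y)) by (apply zero_r; auto).
  destruct (proj2 Hk _ _ Z2) as [u [Hu _]].
  exists u. split; auto. apply Hm. rewrite comp_assoc, Hu, comp_idl, comp_idr. auto.
Qed.

Lemma iso_epi {X Y : C} (m : Hom X Y) : is_iso m -> epi m.
Proof. intros [g [H1 H2]]. exact (split_epi H2). Qed.

Lemma equalizer {M Z : C} (u v : Hom M Z) : exists (E : C) (q : Hom E M),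
  mono q /\ u ∘ q = v ∘ q /\ forall T (w : Hom T M), u ∘ w = v ∘ w -> exists a, w = q ∘ a.
Proof.
  destruct (pairing_eq (idm Z) (idm Z)) as [D1 D2].
  set (δ := pairing (idm Z) (idm Z)) in *.
  assert (Hm : mono δ) by exact (split_mono D1).
  destruct (ab_mono_normal (acat_ax C) Hm) as [W [g Hk]].
  destruct (pairing_eq u v) as [U1 U2]. set (uv := pairing u v) in *.
  set (q := kerM (g ∘ uv)).
  assert (Hq := kerM_is (g ∘ uv)). fold q in Hq.
  exists (kerO (g ∘ uv)), q. split; [|split].
  - exact (ker_mono Hq).
  - assert (Z1 : zero_mor (g ∘ (uv ∘ q))) by (rewrite comp_assoc; apply (proj1 Hq)).
    destruct (proj2 Hk _ _ Z1) as [z [Hz _]].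
    transitivity (pr1 Z Z ∘ (uv ∘ q)). { rewrite comp_assoc, U1. auto. }
    transitivity (pr2 Z Z ∘ (uv ∘ q)). 2:{ rewrite comp_assoc, U2. auto. }
    rewrite <- Hz, !comp_assoc. fold δ. rewrite D1, D2. auto.
  - intros T w E. assert (Ew : uv ∘ w = δ ∘ (u ∘ w)).
    { apply (prod_uniq (@prod_is Z Z)); rewrite !comp_assoc; fold δ; rewrite ?D1, ?D2, ?U1, ?U2, comp_idl; auto. }
    assert (Z1 : zero_mor ((g ∘ uv) ∘ w)).
    { rewrite <- comp_assoc, Ew, comp_assoc. apply zero_r, (proj1 Hk). }
    destruct (proj2 Hq _ _ Z1) as [a [Ha _]]. exists a. auto.
Qed.

Lemma factor_epi {A B Q M : C} (f : Hom A B) (pi : Hom B Q) (m : Hom M B) :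
  is_cokernel f pi -> is_kernel pi m -> m ∘ lift m f = f /\ epi (lift m f).
Proof.
  intros Hc Hk. assert (Hmf : m ∘ lift m f = f) by (apply (lift_eq Hk), (proj1 Hc)).
  split; auto. intros T t t' E.
  destruct (equalizer t t') as [Eo [q [Hq [Eq Hun]]]].
  destruct (Hun _ _ E) as [a Ha].
  assert (Hmq : mono (m ∘ q)) by (apply mono_comp; auto; exact (ker_mono Hk)).
  destruct (ab_mono_normal (acat_ax C) Hmq) as [W [g Hg]].
  assert (Zgf : zero_mor (g ∘ f)).
  { rewrite <- Hmf, Ha, !comp_assoc. apply zero_r. rewrite <- comp_assoc. apply (proj1 Hg). }
  destruct (proj2 Hc _ _ Zgf) as [h [Hh _]].
  assert (Zgm : zero_mor (g ∘ m)) by (rewrite <- Hh, <- comp_assoc; apply zero_l, (proj1 Hk)).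
  destruct (proj2 Hg _ _ Zgm) as [b [Hb _]].
  assert (Eqb : q ∘ b = idm _).
  { apply (ker_mono Hk). rewrite comp_idr, comp_assoc. auto. }
  rewrite <- (comp_idr t), <- (comp_idr t'), <- Eqb, !comp_assoc, Eq. auto.
Qed.

Lemma normal_coker {Y I K : C} (e : Hom Y I) (k : Hom K Y) :
  epi e -> is_kernel e k -> is_cokernel k e.
Proof.
  intros He Hk. destruct (ab_epi_normal (acat_ax C) He) as [X0 [g0 Hc]].
  split; [exact (proj1 Hk)|]. intros W t Zt.
  destruct (proj2 Hk _ _ (proj1 Hc)) as [a [Ha _]].
  apply (proj2 Hc). rewrite <- Ha, comp_assoc. apply zero_r; auto.
Qed.

Lemma ker_strip {A B B' K : C} (m : Hom B B') (g : Hom A B) (k : Hom K A) :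
  mono m -> is_kernel (m ∘ g) k -> is_kernel g k.
Proof.
  intros Hm [H1 H2]. split.
  - apply (zero_mono Hm). rewrite comp_assoc; auto.
  - intros X y Zy. apply H2. rewrite <- comp_assoc. apply zero_l; auto.
Qed.

Lemma mono_test {A B : C} (f : Hom A B) :
  (forall T (y : Hom T A), zero_mor (f ∘ y) -> zero_mor y) -> mono f.
Proof.
  intros H. set (m := kerM (cokerM f)).
  destruct (factor_epi (cokerM_is f) (kerM_is (cokerM f))) as [Hmf He]. fold m in Hmf, He.
  set (e := lift m f) in *.
  assert (Hc := normal_coker He (kerM_is e)).
  assert (Zk : zero_mor (kerM e)).
  { apply H. assert (E : f ∘ kerM e = m ∘ (e ∘ kerM e)) by (rewrite comp_assoc, Hmf; auto).
    rewrite E. apply zero_l, (proj1 (kerM_is e)). }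
  assert (Z1 : zero_mor (idm _ ∘ kerM e)) by (apply zero_l; auto).
  destruct (proj2 Hc _ _ Z1) as [u [Hu _]].
  rewrite <- Hmf. apply mono_comp. exact (ker_mono (kerM_is _)). exact (split_mono Hu).
Qed.

Lemma epi_test {A B : C} (f : Hom A B) :
  (forall W (t : Hom B W), zero_mor (t ∘ f) -> zero_mor t) -> epi f.
Proof.
  intros H. set (m := kerM (cokerM f)).
  destruct (factor_epi (cokerM_is f) (kerM_is (cokerM f))) as [Hmf He]. fold m in Hmf, He.
  assert (Zc : zero_mor (cokerM f)) by (apply H, (proj1 (cokerM_is f))).
  assert (Z1 : zero_mor (cokerM f ∘ idm _)) by (apply zero_r; auto).
  destruct (proj2 (kerM_is (cokerM f)) _ _ Z1) as [u [Hu _]]. fold m in Hu.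
  rewrite <- Hmf. apply epi_comp; auto. exact (split_epi Hu).
Qed.


Lemma quot_mono {Kk A0 R0 H0 : C} (g : Hom A0 Kk) (pi : Hom Kk R0) (psi : Hom Kk H0) (phi : Hom R0 H0) :
  is_cokernel g pi -> phi ∘ pi = psi -> zero_mor (pi ∘ kerM psi) -> mono phi.
Proof.
  intros Hc Hpp Z.
  destruct (factor_epi (cokerM_is psi) (kerM_is (cokerM psi))) as [Hm He].
  set (m := kerM (cokerM psi)) in *. set (e := lift m psi) in *.
  assert (Mm : mono m) by exact (ker_mono (kerM_is _)).
  assert (Hke : is_kernel e (kerM psi)).
  { apply (ker_strip Mm). rewrite Hm. apply kerM_is. }
  assert (Hce := normal_coker He Hke).
  assert (Zeg : zero_mor (e ∘ g)).
  { apply (zero_mono Mm). rewrite comp_assoc, Hm, <- Hpp, <- comp_assoc. apply zero_l, (proj1 Hc). }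
  destruct (proj2 Hc _ _ Zeg) as [b [Hb _]].
  destruct (proj2 Hce _ _ Z) as [a [Ha _]].
  assert (Pe : epi pi) by exact (coker_epi Hc).
  assert (Hab : a ∘ b = idm _).
  { apply Pe. rewrite <- comp_assoc, Hb, Ha, comp_idl. auto. }
  assert (Hphi : phi = m ∘ b).
  { apply Pe. rewrite Hpp, <- comp_assoc, Hb. auto. }
  rewrite Hphi. apply mono_comp; auto. exact (split_mono Hab).
Qed.

Lemma sub_epi {Y G0 Kk M0 : C} (g : Hom Y G0) (k : Hom Kk Y) (psi : Hom M0 Y) (phi : Hom M0 Kk) :
  is_kernel g k -> k ∘ phi = psi ->
  (forall W (t : Hom Y W), zero_mor (t ∘ psi) -> zero_mor (t ∘ k)) -> epi phi.
Proof.
  intros Hk Hpp Ht.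
  destruct (factor_epi (cokerM_is psi) (kerM_is (cokerM psi))) as [Hm He].
  set (m := kerM (cokerM psi)) in *. set (e := lift m psi) in *.
  assert (Zck : zero_mor (cokerM psi ∘ k)) by (apply Ht, (proj1 (cokerM_is psi))).
  assert (Zgm : zero_mor (g ∘ m)).
  { apply (zero_epi He). rewrite <- comp_assoc, Hm, <- Hpp, comp_assoc. apply zero_r, (proj1 Hk). }
  destruct (proj2 Hk _ _ Zgm) as [b [Hb _]].
  destruct (proj2 (kerM_is (cokerM psi)) _ _ Zck) as [a [Ha _]]. fold m in Ha.
  assert (Mk : mono k) by exact (ker_mono Hk).
  assert (Hba : b ∘ a = idm _).
  { apply Mk. rewrite comp_assoc, Hb, Ha, comp_idr. auto. }
  assert (Hphi : phi = b ∘ e).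
  { apply Mk. rewrite Hpp, comp_assoc, Hb. auto. }
  rewrite Hphi. apply epi_comp; auto. exact (split_epi Hba).
Qed.

Lemma cover {U0 I N : C} (e : Hom U0 I) (w : Hom N I) :
  epi e -> mono w -> exists (P : C) (k : Hom P U0) (r : Hom P N), epi r /\ e ∘ k = w ∘ r.
Proof.
  intros He Hw. destruct (ab_mono_normal (acat_ax C) Hw) as [G [g Hk]].
  set (k := kerM (g ∘ e)).
  assert (Zk : zero_mor (g ∘ (e ∘ k))) by (rewrite comp_assoc; apply (proj1 (kerM_is _))).
  assert (Hwr := lift_eq Hk Zk). set (r := lift w (e ∘ k)) in *.
  exists (kerO (g ∘ e)), k, r. split; auto.
  apply (sub_epi Hk Hwr). intros W t Zt.
  destruct (factor_epi (cokerM_is g) (kerM_is (cokerM g))) as [Hm Hge].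
  set (i := kerM (cokerM g)) in *. set (gm := lift i g) in *.
  assert (Mi : mono i) by exact (ker_mono (kerM_is _)).
  assert (Hkg : is_kernel gm w) by (apply (ker_strip Mi); rewrite Hm; auto).
  assert (Hkge : is_kernel (gm ∘ e) k).
  { apply (ker_strip Mi). rewrite comp_assoc, Hm. apply kerM_is. }
  assert (Hc := normal_coker (epi_comp Hge He) Hkge).
  assert (Z1 : zero_mor ((t ∘ e) ∘ k)) by (rewrite <- comp_assoc; auto).
  destruct (proj2 Hc _ _ Z1) as [s [Hs _]].
  assert (Ht : t = s ∘ gm) by (apply He; rewrite <- comp_assoc; auto).
  rewrite Ht, <- comp_assoc. apply zero_l, (proj1 Hkg).
Qed.

Lemma img_cover {L0 X0 Q0 N : C} (d : Hom L0 X0) (pi : Hom X0 Q0) (w : Hom N X0) :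
  is_cokernel d pi -> mono w -> zero_mor (pi ∘ w) ->
  exists (P : C) (k : Hom P L0) (r : Hom P N), epi r /\ w ∘ r = d ∘ k.
Proof.
  intros Hc Hw Z.
  destruct (factor_epi Hc (kerM_is pi)) as [Hm He].
  set (m := kerM pi) in *. set (e := lift m d) in *.
  assert (Hv := lift_eq (kerM_is pi) Z). fold m in Hv. set (v := lift m w) in *.
  assert (Mv : mono v) by (apply (mono_of_comp (f := m)); rewrite Hv; auto).
  destruct (cover He Mv) as [P [k [r [Hr E]]]].
  exists P, k, r. split; auto. rewrite <- Hv, <- comp_assoc, <- E, comp_assoc, Hm. auto.
Qed.

Lemma cover2 {Y Z0 J M W : C} (h : Hom Y Z0) (j : Hom J Y) (m : Hom M Y) (s : Hom Y W) :
  is_kernel h j -> epi (h ∘ m) -> zero_mor (s ∘ j) -> zero_mor (s ∘ m) -> zero_mor s.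
Proof.
  intros Hk Ehm Zj Zm.
  destruct (factor_epi (cokerM_is h) (kerM_is (cokerM h))) as [Hi Hg].
  set (i := kerM (cokerM h)) in *. set (gm := lift i h) in *.
  assert (Mi : mono i) by exact (ker_mono (kerM_is _)).
  assert (Hkg : is_kernel gm j) by (apply (ker_strip Mi); rewrite Hi; auto).
  assert (Hc := normal_coker Hg Hkg).
  destruct (proj2 Hc _ _ Zj) as [a [Ha _]].
  assert (Ei : epi i).
  { apply (epi_of_comp (g := gm ∘ m)). rewrite comp_assoc, Hi. auto. }
  destruct (iso_of Mi Ei) as [i' [I1 I2]].
  assert (Egm : epi (gm ∘ m)).
  { assert (E : gm ∘ m = i' ∘ (h ∘ m)).
    { transitivity (i' ∘ i ∘ gm ∘ m). { rewrite I1, comp_idl; auto. }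
      rewrite <- (comp_assoc i' i gm), Hi, <- comp_assoc. auto. }
    rewrite E. apply epi_comp; auto. exact (split_epi I1). }
  rewrite <- Ha. apply zero_r. apply (zero_epi Egm). rewrite comp_assoc, Ha. auto.
Qed.

Lemma kerJ {X0 R0 G0 H0 K1 Kh : C} (e : Hom X0 R0) (g1 : Hom X0 G0) (k1 : Hom K1 X0)
  (h : Hom X0 H0) (kh : Hom Kh X0) (j : Hom K1 Kh) :
  is_kernel g1 k1 -> (forall T (y : Hom T X0), zero_mor (e ∘ y) -> zero_mor (h ∘ y) -> zero_mor (g1 ∘ y)) ->
  zero_mor (e ∘ k1) -> is_kernel h kh -> kh ∘ j = k1 -> is_kernel (e ∘ kh) j.
Proof.
  intros Hk1 Hg Zek Hkh Hj. split.
  - rewrite <- comp_assoc, Hj. auto.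
  - intros T z Zz.
    assert (Z2 : zero_mor (g1 ∘ (kh ∘ z))).
    { apply Hg. rewrite comp_assoc; auto. rewrite comp_assoc. apply zero_r, (proj1 Hkh). }
    destruct (proj2 Hk1 _ _ Z2) as [w [Hw _]].
    assert (Mj : mono j) by (apply (mono_of_comp (f := kh)); rewrite Hj; exact (ker_mono Hk1)).
    exists w. split.
    + apply (ker_mono Hkh). rewrite comp_assoc, Hj. auto.
    + intros w' Hw'. apply Mj. rewrite Hw'. apply (ker_mono Hkh). rewrite comp_assoc, Hj. auto.
Qed.

End Gen.

Section Main.
Context {C : AbelianCategory}.

Lemma lemA {X L U R D UL DR P : C} (d : Hom L X) (c : Hom U X) (e : Hom X R) (f : Hom X D)
  (p : Hom UL X) (q : Hom X DR) (p1 : Hom P R) (p2 : Hom P D) (G : Hom X P) :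
  is_product p1 p2 -> p1 ∘ G = e -> p2 ∘ G = f ->
  zero_mor (e ∘ d) -> zero_mor (f ∘ c) -> (exists a, p = d ∘ a) -> (exists a, p = c ∘ a) ->
  (exists g, q = g ∘ f) ->
  (forall W (t : Hom X W), zero_mor (t ∘ p) -> forall T (u : Hom T U),
      zero_mor (e ∘ c ∘ u) -> zero_mor (t ∘ c ∘ u)) ->
  (forall Y (y : Hom Y X) J (j : Hom J Y) (m : Hom U Y), zero_mor (q ∘ y) ->
      is_kernel (e ∘ y) j -> y ∘ m = c -> forall W (s : Hom Y W),
      zero_mor (s ∘ j) -> zero_mor (s ∘ m) -> zero_mor s) ->
  is_iso (colift (cokerM (lift (kerM G) p)) (cokerM (lift (kerM f) c) ∘ lift (kerM f) (kerM G))).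
Proof.
  intros Hp HG1 HG2 Zed Zfc [a1 Hpd] [a2 Hpc] [g Hqf] Ust Rst.
  assert (Gz1 : forall T (y : Hom T X), zero_mor (G ∘ y) -> zero_mor (e ∘ y) /\ zero_mor (f ∘ y)).
  { intros T y Z. rewrite <- HG1, <- HG2, <- !comp_assoc. split; apply zero_l; auto. }
  assert (Gz2 : forall T (y : Hom T X), zero_mor (e ∘ y) -> zero_mor (f ∘ y) -> zero_mor (G ∘ y)).
  { intros T y Z1 Z2. apply (prod_zero Hp); rewrite comp_assoc; [rewrite HG1|rewrite HG2]; auto. }
  assert (HkG := kerM_is G). set (k := kerM G) in *.
  destruct (Gz1 _ _ (proj1 HkG)) as [Zek Zfk].
  assert (Hp' : k ∘ lift k p = p).
  { apply (lift_eq HkG). apply Gz2.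
    - rewrite Hpd, comp_assoc. apply zero_r; auto.
    - rewrite Hpc, comp_assoc. apply zero_r; auto. }
  set (p' := lift k p) in *.
  assert (Hkf := kerM_is f). set (kf := kerM f) in *.
  assert (Hc' := lift_eq Hkf Zfc). set (c' := lift kf c) in *.
  assert (Hj := lift_eq Hkf Zfk). set (j := lift kf k) in *.
  set (piR := cokerM p'). set (piv := cokerM c'). set (psi := piv ∘ j).
  assert (Mkf : mono kf) by exact (ker_mono Hkf).
  assert (Zpsi : zero_mor (psi ∘ p')).
  { assert (E : j ∘ p' = c' ∘ a2).
    { apply Mkf. rewrite !comp_assoc, Hj, Hc', Hp'. auto. }
    unfold psi. rewrite <- comp_assoc, E, comp_assoc. apply zero_r, (proj1 (cokerM_is c')). }
  assert (Hphi := colift_eq (cokerM_is p') Zpsi). fold piR in Hphi.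
  set (phi := colift piR psi) in *.
  apply iso_of.
  - apply (quot_mono (cokerM_is p') Hphi).
    assert (Hn := kerM_is psi). set (n := kerM psi) in *.
    assert (Mj : mono j) by (apply (mono_of_comp (f := kf)); rewrite Hj; exact (ker_mono HkG)).
    assert (Mjn : mono (j ∘ n)) by exact (mono_comp Mj (ker_mono Hn)).
    assert (Z1 : zero_mor (piv ∘ (j ∘ n))) by (rewrite comp_assoc; exact (proj1 Hn)).
    destruct (img_cover (cokerM_is c') Mjn Z1) as [P0 [kk [r [Hr E1]]]].
    assert (E2 : k ∘ n ∘ r = c ∘ kk).
    { transitivity (kf ∘ (j ∘ n ∘ r)). { rewrite !comp_assoc, Hj. auto. }
      rewrite E1, comp_assoc, Hc'. auto. }
    assert (Z2 : zero_mor (e ∘ c ∘ kk)).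
    { rewrite <- comp_assoc, <- E2, !comp_assoc. apply zero_r, zero_r; auto. }
    assert (Z3' := Ust _ (cokerM p) (proj1 (cokerM_is p)) _ kk Z2).
    assert (Z3 : zero_mor (cokerM p ∘ (k ∘ n))).
    { apply (zero_epi Hr). rewrite <- comp_assoc, E2, comp_assoc. exact Z3'. }
    assert (Mkn : mono (k ∘ n)) by exact (mono_comp (ker_mono HkG) (ker_mono Hn)).
    destruct (img_cover (cokerM_is p) Mkn Z3) as [P1 [kk' [r' [Hr' E3]]]].
    assert (E4 : n ∘ r' = p' ∘ kk').
    { apply (ker_mono HkG). rewrite !comp_assoc, E3, Hp'. auto. }
    apply (zero_epi Hr'). rewrite <- comp_assoc, E4, comp_assoc. apply zero_r, (proj1 (cokerM_is p')).
  - apply (epi_of_comp (g := piR)). rewrite Hphi. apply epi_test. intros W t Zt.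
    apply (zero_epi (coker_epi (cokerM_is c'))).
    apply (Rst _ kf _ j c'); auto.
    + rewrite Hqf, <- comp_assoc. apply zero_l, (proj1 Hkf).
    + apply (kerJ (g1 := G) (h := f) HkG); auto.
    + rewrite <- comp_assoc. exact Zt.
    + rewrite <- comp_assoc. apply zero_l, (proj1 (cokerM_is c')).
Qed.


Lemma lemB {X L U R D UL DR S : C} (d : Hom L X) (c : Hom U X) (e : Hom X R) (f : Hom X D)
  (p : Hom UL X) (q : Hom X DR) (i1 : Hom U S) (i2 : Hom L S) (H : Hom S X) :
  is_coproduct i1 i2 -> H ∘ i1 = c -> H ∘ i2 = d ->
  zero_mor (e ∘ d) -> zero_mor (f ∘ c) -> (exists a, p = d ∘ a) ->
  (exists g, q = g ∘ e) -> (exists g, q = g ∘ f) ->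
  (forall W (t : Hom X W), zero_mor (t ∘ p) -> forall T (u : Hom T U),
      zero_mor (e ∘ c ∘ u) -> zero_mor (t ∘ c ∘ u)) ->
  (forall Y (y : Hom Y X) J (j : Hom J Y) (m : Hom U Y), zero_mor (q ∘ y) ->
      is_kernel (e ∘ y) j -> y ∘ m = c -> forall W (s : Hom Y W),
      zero_mor (s ∘ j) -> zero_mor (s ∘ m) -> zero_mor s) ->
  is_iso (colift (cokerM (lift (kerM e) d)) (lift (kerM (colift (cokerM H) q)) (cokerM H ∘ kerM e))).
Proof.
  intros Hcp H1 H2 Zed Zfc [a1 Hpd] [g1 Hqe] [g2 Hqf] Ust Rst.
  assert (Hke := kerM_is e). set (ke := kerM e) in *.
  assert (Hd' := lift_eq Hke Zed). set (d' := lift ke d) in *.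
  assert (Hq : zero_mor (q ∘ H)).
  { apply (coprod_zero Hcp); rewrite <- comp_assoc.
    - rewrite H1, Hqf, <- comp_assoc. apply zero_l; auto.
    - rewrite H2, Hqe, <- comp_assoc. apply zero_l; auto. }
  assert (HQ := cokerM_is H). set (Qpi := cokerM H) in *.
  assert (Hqb := colift_eq HQ Hq). set (qbar := colift Qpi q) in *.
  assert (Hdk := kerM_is qbar). set (dk := kerM qbar) in *.
  assert (Zqke : zero_mor (q ∘ ke)) by (rewrite Hqe, <- comp_assoc; apply zero_l, (proj1 Hke)).
  assert (Hl : dk ∘ lift dk (Qpi ∘ ke) = Qpi ∘ ke).
  { apply (lift_eq Hdk). rewrite comp_assoc, Hqb. auto. }
  set (l := lift dk (Qpi ∘ ke)) in *.
  assert (Zld : zero_mor (l ∘ d')).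
  { apply (zero_mono (ker_mono Hdk)). rewrite comp_assoc, Hl, <- comp_assoc, Hd', <- H2, comp_assoc.
    apply zero_r, (proj1 HQ). }
  assert (Hchi := colift_eq (cokerM_is d') Zld).
  set (chi := colift (cokerM d') l) in *.
  apply iso_of.
  - apply (quot_mono (cokerM_is d') Hchi).
    assert (Hn := kerM_is l). set (n := kerM l) in *.
    assert (Z1 : zero_mor (Qpi ∘ (ke ∘ n))).
    { assert (Z0 : zero_mor (dk ∘ (l ∘ n))) by (apply zero_l, (proj1 Hn)).
      rewrite comp_assoc, Hl, <- comp_assoc in Z0. exact Z0. }
    assert (Mken : mono (ke ∘ n)) by exact (mono_comp (ker_mono Hke) (ker_mono Hn)).
    destruct (img_cover HQ Mken Z1) as [P0 [kk [r [Hr E1]]]].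
    destruct (zero_exists L U) as [z Hz].
    destruct (Hcp U (idm U) z) as [i [[Hi1 Hi2] _]].
    assert (EH : forall W (x : Hom X W), zero_mor (x ∘ d) -> x ∘ H = x ∘ c ∘ i).
    { intros W x Zx. apply (coprod_uniq Hcp).
      - rewrite <- !comp_assoc, H1, Hi1, comp_idr. auto.
      - apply zero_unique.
        + rewrite <- comp_assoc, H2. auto.
        + rewrite <- comp_assoc, Hi2. apply zero_l; auto. }
    assert (Z2 : zero_mor (e ∘ c ∘ (i ∘ kk))).
    { rewrite comp_assoc, <- (EH _ e Zed), <- comp_assoc, <- E1, !comp_assoc.
      apply zero_r, zero_r, (proj1 Hke). }
    assert (Zdp : zero_mor (cokerM d ∘ p)).
    { rewrite Hpd, comp_assoc. apply zero_r, (proj1 (cokerM_is d)). }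
    assert (Z3' := Ust _ (cokerM d) Zdp _ (i ∘ kk) Z2).
    assert (Z3 : zero_mor (cokerM d ∘ (ke ∘ n))).
    { apply (zero_epi Hr). rewrite <- comp_assoc, E1, comp_assoc,
        (EH _ (cokerM d) (proj1 (cokerM_is d))), <- comp_assoc. exact Z3'. }
    destruct (img_cover (cokerM_is d) Mken Z3) as [P1 [kk' [r' [Hr' E3]]]].
    assert (E4 : n ∘ r' = d' ∘ kk').
    { apply (ker_mono Hke). rewrite !comp_assoc, E3, Hd'. auto. }
    apply (zero_epi Hr'). rewrite <- comp_assoc, E4, comp_assoc. apply zero_r, (proj1 (cokerM_is d')).
  - apply (epi_of_comp (g := cokerM d')). rewrite Hchi. apply (sub_epi Hdk Hl). intros W t Zt.
    destruct (cover (coker_epi HQ) (ker_mono Hdk)) as [P0 [kk [r [Hr E1]]]].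
    assert (Zqk : zero_mor (q ∘ kk)).
    { rewrite <- Hqb, <- comp_assoc, E1, comp_assoc. apply zero_r, (proj1 Hdk). }
    assert (Hkq := kerM_is q). set (kq := kerM q) in *.
    assert (Ha := lift_eq Hkq Zqk). set (a := lift kq kk) in *.
    assert (Zqc : zero_mor (q ∘ c)) by (rewrite Hqf, <- comp_assoc; apply zero_l; auto).
    assert (Hm := lift_eq Hkq Zqc). set (m := lift kq c) in *.
    assert (Hj2 := lift_eq Hkq Zqke). set (j2 := lift kq ke) in *.
    assert (Hkj : is_kernel (e ∘ kq) j2).
    { apply (kerJ (g1 := e) (h := q) Hke); auto. exact (proj1 Hke). }
    assert (Zj : zero_mor (t ∘ Qpi ∘ kq ∘ j2)).
    { rewrite <- comp_assoc, Hj2, <- comp_assoc. exact Zt. }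
    assert (Zm : zero_mor (t ∘ Qpi ∘ kq ∘ m)).
    { rewrite <- comp_assoc, Hm, <- H1, !comp_assoc. apply zero_r. rewrite <- comp_assoc. apply zero_l, (proj1 HQ). }
    assert (Zs := Rst _ kq _ j2 m (proj1 Hkq) Hkj Hm W (t ∘ Qpi ∘ kq) Zj Zm).
    apply (zero_epi Hr). rewrite <- comp_assoc, <- E1, <- Ha, !comp_assoc. apply zero_r; auto.
Qed.


Lemma donor_lemma {U UU UL DR : C} (cU : Hom UU U) (dU : Hom UL U) (qU : Hom U DR) :
  zero_mor (qU ∘ cU) -> zero_mor (qU ∘ dU) -> is_zero_obj (donor cU dU qU) ->
  forall W (t : Hom U W), zero_mor (t ∘ cU) -> zero_mor (t ∘ dU) ->
  forall P (u : Hom P U), zero_mor (qU ∘ u) -> zero_mor (t ∘ u).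
Proof.
  intros Z1 Z2 HZ W t T1 T2 P u Zu.
  destruct (copairing_eq cU dU) as [C1 C2]. set (H := copairing cU dU) in *.
  assert (Hq : zero_mor (qU ∘ H)).
  { apply (coprod_zero (coprod_is (A:=UU) (B:=UL))); rewrite <- comp_assoc; [rewrite C1|rewrite C2]; auto. }
  assert (HQ := cokerM_is H). set (Qpi := cokerM H) in *.
  assert (Hqb := colift_eq HQ Hq). set (qbar := colift Qpi qU) in *.
  assert (Mq : mono qbar).
  { apply mono_test. intros T y Zy.
    rewrite <- (lift_eq (kerM_is _) Zy). apply zero_l. apply zero_to. exact HZ. }
  assert (Zu' : zero_mor (Qpi ∘ u)).
  { apply (zero_mono Mq). rewrite comp_assoc, Hqb. auto. }
  assert (Hw := lift_eq (kerM_is Qpi) Zu').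
  destruct (factor_epi HQ (kerM_is Qpi)) as [Hm He].
  assert (Ztm : zero_mor (t ∘ kerM Qpi)).
  { apply (zero_epi He). rewrite <- comp_assoc, Hm.
    apply (coprod_zero (coprod_is (A:=UU) (B:=UL))); rewrite <- comp_assoc; [rewrite C1|rewrite C2]; auto. }
  rewrite <- Hw, comp_assoc. apply zero_r; auto.
Qed.

Lemma rec_star {X R RR RD UL DR U : C} (e' : Hom R RR) (f' : Hom R RD) (p' : Hom UL R)
  (x : Hom X R) (q : Hom X DR) (cc : Hom U X) :
  zero_mor (e' ∘ p') -> zero_mor (f' ∘ p') -> is_zero_obj (receptor e' f' p') ->
  (forall T (y : Hom T X), zero_mor (q ∘ y) -> zero_mor (e' ∘ x ∘ y)) ->
  (forall T (y : Hom T X), zero_mor (q ∘ y) -> zero_mor (f' ∘ x ∘ y)) ->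
  (exists b, p' = x ∘ cc ∘ b) ->
  forall Y (y : Hom Y X) J (j : Hom J Y) (m : Hom U Y), zero_mor (q ∘ y) ->
      is_kernel (x ∘ y) j -> y ∘ m = cc -> forall W (s : Hom Y W),
      zero_mor (s ∘ j) -> zero_mor (s ∘ m) -> zero_mor s.
Proof.
  intros Z1 Z2 HZ Hx1 Hx2 [b Hb] Y y J j m Zy Hk Hm W s Zsj Zsm.
  destruct (pairing_eq e' f') as [P1 P2]. set (G := pairing e' f') in *.
  assert (Gz : forall T (z : Hom T R), zero_mor (e' ∘ z) -> zero_mor (f' ∘ z) -> zero_mor (G ∘ z)).
  { intros T z Za Zb. apply (prod_zero (prod_is (A:=RR) (B:=RD))); rewrite comp_assoc; [rewrite P1|rewrite P2]; auto. }
  assert (HkR := kerM_is G). set (kR := kerM G) in *.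
  assert (HpR : kR ∘ lift kR p' = p') by (apply (lift_eq HkR); apply Gz; auto).
  assert (Ep : epi (lift kR p')).
  { apply epi_test. intros W0 t Zt.
    destruct (proj2 (cokerM_is (lift kR p')) _ t Zt) as [u [Hu _]].
    rewrite <- Hu. apply zero_r. apply zero_from. exact HZ. }
  assert (Hh : kR ∘ lift kR (x ∘ y) = x ∘ y).
  { apply (lift_eq HkR). apply Gz; rewrite comp_assoc; auto. }
  set (h := lift kR (x ∘ y)) in *.
  assert (Hkh : is_kernel h j) by (apply (ker_strip (ker_mono HkR)); rewrite Hh; auto).
  assert (Ehm : h ∘ m ∘ b = lift kR p').
  { apply (ker_mono HkR). rewrite !comp_assoc, Hh, <- (comp_assoc x y m), Hm, HpR. symmetry; exact Hb. }
  apply (cover2 (m := m) Hkh); auto.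
  apply (epi_of_comp (g := b)). rewrite Ehm. exact Ep.
Qed.

End Main.

Section Geo.
Context {C : AbelianCategory} (A : DoubleComplex C).

Lemma Z_ed i r : zero_mor (eout A i r ∘ din A i r).
Proof. unfold eout, din. generalize (Z.succ_pred r). generalize (Z.pred r). intros s E. destruct E. exact (d2d2 A i s). Qed.

Lemma Z_fc i r : zero_mor (fout A i r ∘ cin A i r).
Proof. unfold fout, cin. generalize (Z.succ_pred i). generalize (Z.pred i). intros s E. destruct E. exact (d1d1 A s r). Qed.

Lemma Z_cc i r : zero_mor (cin A i r ∘ cin A (Z.pred i) r).
Proof.
  unfold cin. generalize (Z.succ_pred i) (Z.succ_pred (Z.pred i)).
  generalize (Z.pred (Z.pred i)). generalize (Z.pred i). intros s t E1 E2.
  destruct E2. destruct E1. exact (d1d1 A t r).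
Qed.

Lemma Z_dd i r : zero_mor (din A i r ∘ din A i (Z.pred r)).
Proof.
  unfold din. generalize (Z.succ_pred r) (Z.succ_pred (Z.pred r)).
  generalize (Z.pred (Z.pred r)). generalize (Z.pred r). intros s t E1 E2.
  destruct E2. destruct E1. exact (d2d2 A i t).
Qed.

Lemma P_c i r : pin A i r = cin A i r ∘ din A (Z.pred i) r.
Proof.
  unfold pin, cin, din. generalize (Z.succ_pred r) (Z.succ_pred i).
  generalize (Z.pred r). generalize (Z.pred i). intros s t Er Ei.
  destruct Er, Ei. symmetry. exact (d1d2 A s t).
Qed.

Lemma Q_f i r : qout A i r = eout A (Z.succ i) r ∘ fout A i r.
Proof. exact (d1d2 A i r). Qed.

Lemma U_q i r : exists T, qout A (Z.pred i) r = T ∘ (eout A i r ∘ cin A i r).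
Proof.
  unfold qout, eout, cin. generalize (Z.succ_pred i). generalize (Z.pred i). intros s E.
  destruct E. exists (idm _). rewrite comp_idl. exact (d1d2 A s r).
Qed.

Lemma L_q i r : exists T, qout A i (Z.pred r) = T ∘ (fout A i r ∘ din A i r).
Proof.
  unfold qout, fout, din. generalize (Z.succ_pred r). generalize (Z.pred r). intros s E.
  destruct E. exists (idm _). rewrite comp_idl. reflexivity.
Qed.

Lemma R_p i r : exists b, pin A i (Z.succ r) = eout A i r ∘ cin A i r ∘ b.
Proof.
  unfold pin, din, cin, eout.
  generalize (Z.succ_pred (Z.succ r)). generalize (Z.pred_succ r). generalize (Z.pred (Z.succ r)).
  intros t Et E1. subst t. rewrite (proof_irrelevance _ E1 eq_refl).
  exists (idm _). rewrite comp_idr. reflexivity.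
Qed.

Lemma D_p i r : exists b, pin A (Z.succ i) r = fout A i r ∘ din A i r ∘ b.
Proof.
  unfold pin, din, cin, fout.
  generalize (Z.succ_pred (Z.succ i)). generalize (Z.pred_succ i). generalize (Z.pred (Z.succ i)).
  intros t Et E1. subst t. rewrite (proof_irrelevance _ E1 eq_refl).
  exists (idm _). rewrite comp_idr. cbn.
  generalize (Z.succ_pred r). generalize (Z.pred r). intros s E. destruct E.
  symmetry. exact (d1d2 A i s).
Qed.

Lemma Z_ep i r : zero_mor (eout A i r ∘ pin A i r).
Proof. unfold pin. rewrite comp_assoc. apply zero_r, Z_ed. Qed.

Lemma Z_fp i r : zero_mor (fout A i r ∘ pin A i r).
Proof. rewrite P_c, comp_assoc. apply zero_r, Z_fc. Qed.

Lemma Z_qc i r : zero_mor (qout A i r ∘ cin A i r).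
Proof. rewrite Q_f, <- comp_assoc. apply zero_l, Z_fc. Qed.

Lemma Z_qd i r : zero_mor (qout A i r ∘ din A i r).
Proof. unfold qout. rewrite <- comp_assoc. apply zero_l, (Z_ed i r). Qed.

End Geo.

Lemma prod_swap {C : AbelianCategory} {P A B : C} (p1 : Hom P A) (p2 : Hom P B) :
  is_product p1 p2 -> is_product p2 p1.
Proof.
  intros H X f g. destruct (H X g f) as [u [[H1 H2] Hu]].
  exists u. split; auto. intros v [V1 V2]. apply Hu; auto.
Qed.

Lemma coprod_swap {C : AbelianCategory} {S A B : C} (i1 : Hom A S) (i2 : Hom B S) :
  is_coproduct i1 i2 -> is_coproduct i2 i1.
Proof.
  intros H X f g. destruct (H X g f) as [u [[H1 H2] Hu]].
  exists u. split; auto. intros v [V1 V2]. apply Hu; auto.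
Qed.

Unset Implicit Arguments.
Theorem corollary3p1 (C : AbelianCategory) (A : DoubleComplex C) (i r : Z) :
  (is_zero_obj (donor_at A (Z.pred i) r) ->
   is_zero_obj (receptor_at A i (Z.succ r)) ->
   is_iso (rec_to_Hv_at A i r) /\ is_iso (Hh_to_don_at A i r)) /\
  (is_zero_obj (donor_at A i (Z.pred r)) ->
   is_zero_obj (receptor_at A (Z.succ i) r) ->
   is_iso (rec_to_Hh_at A i r) /\ is_iso (Hv_to_don_at A i r)).
Proof.
  split.
  - intros HU HR.
    assert (Ust : forall W (t : Hom (A i r) W), zero_mor (t ∘ pin A i r) -> forall T (u : Hom T _),
      zero_mor (eout A i r ∘ cin A i r ∘ u) -> zero_mor (t ∘ cin A i r ∘ u)).
    { intros W t Zt T u Zu.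
      apply (donor_lemma (Z_qc A (Z.pred i) r) (Z_qd A (Z.pred i) r) HU).
      - rewrite <- comp_assoc. apply zero_l, Z_cc.
      - rewrite <- comp_assoc, <- P_c. exact Zt.
      - destruct (U_q A i r) as [T0 HT]. rewrite HT, <- comp_assoc. apply zero_l; auto. }
    assert (Rst := rec_star (x := eout A i r) (q := qout A i r) (cc := cin A i r)
      (Z_ep A i (Z.succ r)) (Z_fp A i (Z.succ r)) HR
      (fun T y _ => zero_r y (d2d2 A i r)) (fun T y Z => Z) (R_p A i r)).
    destruct (pairing_eq (eout A i r) (fout A i r)) as [G1 G2].
    destruct (copairing_eq (cin A i r) (din A i r)) as [H1 H2].
    split.
    + unfold rec_to_Hv_at, rec_to_Hv, rec_pi, rec_p, rec_K, hom_pi, hom_in.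
      apply (lemA (d := din A i r) (p := pin A i r) (q := qout A i r) (prod_is (A:=_) (B:=_)) G1 G2 (Z_ed A i r) (Z_fc A i r)); auto.
      * exists (cin A i (Z.pred r)). reflexivity.
      * exists (din A (Z.pred i) r). apply P_c.
      * exists (eout A (Z.succ i) r). apply Q_f.
    + unfold Hh_to_don_at, Hh_to_don, hom_pi, hom_in, don_k, don_qbar, don_Qpi.
      apply (lemB (p := pin A i r) (q := qout A i r) (coprod_is (A:=_) (B:=_)) H1 H2 (Z_ed A i r) (Z_fc A i r)); auto.
      * exists (cin A i (Z.pred r)). reflexivity.
      * exists (fout A i (Z.succ r)). reflexivity.
      * exists (eout A (Z.succ i) r). apply Q_f.
  - intros HL HD.
    assert (Lst : forall W (t : Hom (A i r) W), zero_mor (t ∘ pin A i r) -> forall T (u : Hom T _),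
      zero_mor (fout A i r ∘ din A i r ∘ u) -> zero_mor (t ∘ din A i r ∘ u)).
    { intros W t Zt T u Zu.
      apply (donor_lemma (Z_qc A i (Z.pred r)) (Z_qd A i (Z.pred r)) HL).
      - rewrite <- comp_assoc. exact Zt.
      - rewrite <- comp_assoc. apply zero_l, Z_dd.
      - destruct (L_q A i r) as [T0 HT]. rewrite HT, <- comp_assoc. apply zero_l; auto. }
    assert (Dst := rec_star (x := fout A i r) (q := qout A i r) (cc := din A i r)
      (Z_ep A (Z.succ i) r) (Z_fp A (Z.succ i) r) HD
      (fun T y Z => eq_ind _ (fun h => zero_mor (h ∘ y)) Z _ (Q_f A i r))
      (fun T y _ => zero_r y (d1d1 A i r)) (D_p A i r)).
    destruct (pairing_eq (eout A i r) (fout A i r)) as [G1 G2].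
    destruct (copairing_eq (cin A i r) (din A i r)) as [H1 H2].
    split.
    + unfold rec_to_Hh_at, rec_to_Hh, rec_pi, rec_p, rec_K, hom_pi, hom_in.
      apply (lemA (d := cin A i r) (p := pin A i r) (q := qout A i r) (prod_swap (prod_is (A:=_) (B:=_))) G2 G1 (Z_fc A i r) (Z_ed A i r)); auto.
      * exists (din A (Z.pred i) r). apply P_c.
      * exists (cin A i (Z.pred r)). reflexivity.
      * exists (fout A i (Z.succ r)). reflexivity.
    + unfold Hv_to_don_at, Hv_to_don, hom_pi, hom_in, don_k, don_qbar, don_Qpi.
      apply (lemB (p := pin A i r) (q := qout A i r) (coprod_swap (coprod_is (A:=_) (B:=_))) H2 H1 (Z_fc A i r) (Z_ed A i r)); auto.
      * exists (din A (Z.pred i) r). apply P_c.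
      * exists (eout A (Z.succ i) r). apply Q_f.
      * exists (fout A i (Z.succ r)). reflexivity.
Qed.
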